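(* Let $G$ be a linear group (i.e. isomorphic to a subgroup of $GL_n(K)$ for some field $K$ and some $n$). If $G$ is discriminating, then $G$ is abelian.
   Context: A group $G$ is called discriminating if for every integer $N$ and every elements $h_1,\dots,h_N \in G\times G$ there exists a group homomorphism $\rho: G\times G \to G$ such that, for each $i$, $\rho(h_i)=1$ if and only if $h_i=1$. *)

(* Defs.v *)
(* Possibly infinite groups are given by an explicit carrier
   with operations and the group axioms. *)
From mathcomp Require Import all_boot all_algebra.
Set Implicit Arguments. Unset Strict Implicit. Unset Printing Implicit Defensive.
Import GRing.Theory.
Local Open Scope ring_scope.

Definition is_group (G : Type) (mul : G -> G -> G) (inv : G -> G) (one : G) : Prop :=
  (forall x y z, mul x (mul y z) = mul (mul x y) z) /\
  (forall x, mul one x = x) /\ (forall x, mul x one = x) /\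
  (forall x, mul (inv x) x = one) /\ (forall x, mul x (inv x) = one).

Definition is_linear (G : Type) (mul : G -> G -> G) : Prop :=
  exists (K : fieldType) (n : nat) (f : G -> 'M[K]_n),
    injective f /\
    (forall x, f x \in unitmx) /\
    (forall x y, f (mul x y) = f x *m f y).

Definition prod_mul (G : Type) (mul : G -> G -> G) (a b : G * G) : G * G :=
  (mul a.1 b.1, mul a.2 b.2).

Definition discriminating (G : Type) (mul : G -> G -> G) (one : G) : Prop :=
  forall (N : nat) (h : nat -> G * G),
    exists rho : G * G -> G,
      (forall a b, rho (prod_mul mul a b) = mul (rho a) (rho b)) /\
      (forall i, (i < N)%N -> (rho (h i) = one <-> h i = (one, one))).

Definition is_abelian (G : Type) (mul : G -> G -> G) : Prop :=
  forall x y, mul x y = mul y x.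

(* Main.v *)
Require Import Defs.
From mathcomp Require Import all_boot all_algebra.
From Stdlib Require Import Classical.
Set Implicit Arguments. Unset Strict Implicit. Unset Printing Implicit Defensive.

Section Grp.
Variables (G : Type) (mul : G -> G -> G) (inv : G -> G) (one : G).
Hypothesis HG : is_group mul inv one.

Definition cm a b := mul (mul a b) (inv (mul b a)).

Lemma cm_one a b : cm a b = one <-> mul a b = mul b a.
Proof.
case: HG => As [L1 [R1 [LV RV]]]; rewrite /cm; split=> H.
  by rewrite -[mul a b]R1 -(LV (mul b a)) As H L1.
by rewrite H RV.
Qed.

Lemma hom_inv (phi : G -> G) : (forall a b, phi (mul a b) = mul (phi a) (phi b)) ->
  forall a, phi (inv a) = inv (phi a).
Proof.
case: HG => As [L1 [R1 [LV RV]]] Hp.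
have P1 : phi one = one.
  have E1 : mul (phi one) (phi one) = phi one by rewrite -Hp L1.
  transitivity (mul (inv (phi one)) (mul (phi one) (phi one))).
    by rewrite As LV L1.
  by rewrite E1 LV.
move=> a; have E : mul (phi a) (phi (inv a)) = one by rewrite -Hp RV.
transitivity (mul (inv (phi a)) (mul (phi a) (phi (inv a)))).
  by rewrite As LV L1.
by rewrite E R1.
Qed.

Lemma hom_cm (phi : G -> G) : (forall a b, phi (mul a b) = mul (phi a) (phi b)) ->
  forall a b, phi (cm a b) = cm (phi a) (phi b).
Proof. by move=> Hp a b; rewrite /cm Hp hom_inv // !Hp. Qed.

Definition chain (k : nat) (x y : nat -> G) :=
  (forall l i, (l < i < k)%N -> mul (y i) (x l) = mul (x l) (y i)) /\
  (forall i, (i < k)%N -> mul (y i) (x i) <> mul (x i) (y i)).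

Lemma chain_ex (a b : G) : mul b a <> mul a b -> discriminating mul one ->
  forall k, exists x y, chain k x y.
Proof.
move=> Hab Hd; case: (HG) => As [L1 [R1 [LV RV]]].
elim=> [|k [x [y [Hc Hn]]]]; first by exists (fun _ => one), (fun _ => one); split.
pose h i := if (i < k)%N then (cm (y i) (x i), one) else (one, cm b a).
have [rho [Hr Hd2]] := Hd k.+1 h.
pose phi z := rho (z, one); pose psi z := rho (one, z).
have Hphi : forall u v, phi (mul u v) = mul (phi u) (phi v).
  by move=> u v; rewrite /phi -Hr /prod_mul /= L1.
have Hpsi : forall u v, psi (mul u v) = mul (psi u) (psi v).
  by move=> u v; rewrite /psi -Hr /prod_mul /= L1.
have Hcomm : forall u v, mul (psi u) (phi v) = mul (phi v) (psi u).
  by move=> u v; rewrite /phi /psi -!Hr /prod_mul /= L1 R1 L1 R1.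
exists (fun i => if (i < k)%N then phi (x i) else psi a).
exists (fun i => if (i < k)%N then phi (y i) else psi b).
split.
  move=> l i /andP [hli hik]; have hlk : (l < k)%N by apply: leq_trans hli _.
  rewrite hlk; case: ifP => hi; first by rewrite -!Hphi Hc // hli.
  by rewrite Hcomm.
move=> i hik; case: ifP => hi => E.
  have : h i = (one, one).
    apply/(Hd2 i hik); by rewrite /h hi -/(phi _) hom_cm //; apply/cm_one.
  rewrite /h hi => [[]] /cm_one; exact: Hn.
have : h i = (one, one).
  apply/(Hd2 i hik); by rewrite /h hi -/(psi _) hom_cm //; apply/cm_one.
by rewrite /h hi => [[]] /cm_one.
Qed.
End Grp.
Import GRing.Theory.
Local Open Scope ring_scope.
Lemma chain_free (K : fieldType) (n : nat) (A B : nat -> 'M[K]_n) (k : nat) :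
  (forall l i, (l < i < k)%N -> B i *m A l = A l *m B i) ->
  (forall i, (i < k)%N -> B i *m A i != A i *m B i) ->
  forall m a, (a + m <= k)%N -> free (map B (iota a m)).
Proof.
move=> Hc Hn; elim=> [|m IH] a Ham; first by rewrite /= nil_free.
rewrite /= free_cons IH ?andbT; last by rewrite addSnnS.
apply/negP => /(coord_span (X := in_tuple _)) Hs.
have Ha : (a < k)%N by apply: leq_trans Ham; rewrite addnS ltnS leq_addr.
move: (Hn a Ha); rewrite Hs mulmx_suml mulmx_sumr; apply/negP; rewrite negbK; apply/eqP.
apply: eq_bigr => i _; rewrite -scalemxAl -scalemxAr; congr (_ *: _).
have : (map B (iota a.+1 m))`_i \in map B (iota a.+1 m) by apply: mem_nth; case: i.
case/mapP => j; rewrite mem_iota => /andP [h1 h2] ->.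
apply: Hc; rewrite h1 /=; apply: leq_trans Ham; by rewrite addnS.
Qed.

Lemma chain_bound (K : fieldType) (n : nat) (A B : nat -> 'M[K]_n) (k : nat) :
  (forall l i, (l < i < k)%N -> B i *m A l = A l *m B i) ->
  (forall i, (i < k)%N -> B i *m A i != A i *m B i) ->
  (k <= n * n)%N.
Proof.
move=> Hc Hn; have := chain_free Hc Hn (leqnn (0 + k)).
rewrite /free => /eqP; rewrite size_map size_iota => <-.
have := dimvS (subvf <<map B (iota 0 k)>>); by rewrite dimvf dim_matrix.
Qed.

Theorem theorem6p7 (G : Type) (mul : G -> G -> G) (inv : G -> G) (one : G) :
  is_group mul inv one ->
  is_linear mul ->
  discriminating mul one ->
  is_abelian mul.
Proof.
move=> HG [K [n [f [fi [fu fm]]]]] Hd a b.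
apply: NNPP => Hab.
have [x [y [Hc Hn]]] := chain_ex HG (fun E => Hab (esym E)) Hd (n * n).+1.
have Hb := @chain_bound K n (fun i => f (x i)) (fun i => f (y i)) (n * n).+1.
have : ((n * n).+1 <= n * n)%N.
  apply: Hb.
    by move=> l i Hli; rewrite -!fm Hc.
  by move=> i Hi; apply/eqP; rewrite -!fm => /fi; apply: Hn.
by rewrite ltnn.
Qed.
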